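(* Let $W$ be an irreducible finite Weyl group with (connected) Dynkin diagram $\Gamma$. For any nested set $\mathcal{N}$ on $\Gamma$, the element $w(\mathcal{N})=\prod_{J\in\mathcal{N}}w_0(J)$, with the product taken in a monotonic order of $\mathcal{N}$, is separable.
   Context: $\Phi$ is a finite crystallographic root system with simple roots $\Delta$, positive roots $\Phi^+$, Weyl group $W=W(\Phi)$; $I_\Phi(w)=\{\beta\in\Phi^+:w\beta\in-\Phi^+\}$. For $J\subseteq\Delta$, $W_J$ is the parabolic subgroup generated by $\{s_\alpha:\alpha\in J\}$ and $w_0(J)$ its longest element. Root poset: $\beta\leq\beta'$ iff $\beta'-\beta$ is a nonnegative combination of simple roots. $\Phi_J$ is the set of roots in the span of $J$; for a subsystem $\Phi'=\Phi\cap V$, $w|_{\Phi'}\in W(\Phi')$ is the element with inversion set $I_\Phi(w)\cap V$. $w$ is separable if (S1) $\Phi$ has type $A_1$; or (S2) $\Phi=\bigoplus\Phi_i$ is reducible and each $w|_{\Phi_i}$ is separable; or (S3) $\Phi$ is irreducible and some $\alpha_i\in\Delta$ has $w|_{\Phi_{\Delta\setminus\{\alpha_i\}}}$ separable and either $\{\beta\in\Phi^+:\beta\geq\alpha_i\}\subseteq I_\Phi(w)$ or this set is disjoint from $I_\Phi(w)$. The Dynkin diagram $\Gamma$ is the simple graph on $\Delta$ with an edge between $\alpha,\alpha'$ whenever $s_\alpha,s_{\alpha'}$ do not commute. A nested set on $\Gamma$ is a collection $\mathcal{N}$ of vertex subsets satisfying (N1) each $J\in\mathcal{N}$ induces a connected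 subgraph; (N2) any two elements are nested or disjoint; (N3) the union of any $k\geq2$ pairwise disjoint elements induces a disconnected subgraph. A total order on $\mathcal{N}$ is monotonic if $J$ comes after $I$ whenever $J\subseteq I$. *)

(* Defs.v *)
(* Root systems are encoded by their Cartan matrix; roots are
   integer vectors in simple-root coordinates. *)
From mathcomp Require Import all_boot all_order all_algebra.
Set Implicit Arguments. Unset Strict Implicit. Unset Printing Implicit Defensive.
Import Order.TTheory GRing.Theory Num.Theory.
Local Open Scope ring_scope.

Section RootSystem.
Variables (n : nat) (A : 'M[int]_n).
(* Convention: A i j = <alpha_i^vee, alpha_j>, so s_i(alpha_j) = alpha_j - A i j alpha_i. *)

Definition cartan_finite : Prop :=
  [/\ (forall i, A i i = 2),
      (forall i j, i != j -> A i j <= 0),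
      (forall i j, A i j = 0 <-> A j i = 0)
    & exists d : 'I_n -> int,
        [/\ (forall i, 0 < d i),
            (forall i j, d i * A i j = d j * A j i)
          & (forall x : 'rV[int]_n, x != 0 ->
               0 < \sum_i \sum_j x ord0 i * d i * A i j * x ord0 j)]].

Definition sroot (i : 'I_n) : 'rV[int]_n := delta_mx ord0 i.

Definition refl (i : 'I_n) (v : 'rV[int]_n) : 'rV[int]_n :=
  v - (\sum_j A i j * v ord0 j) *: sroot i.

(* a word [:: i1; ...; ik] represents s_{i1} s_{i2} ... s_{ik} *)
Definition act (w : seq 'I_n) (v : 'rV[int]_n) : 'rV[int]_n :=
  foldr refl v w.

Definition same_elt (u v : seq 'I_n) : Prop := forall x, act u x = act v x.

(* length(u) <= length(v) in W *)
Definition length_le (u v : seq 'I_n) : Prop :=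
  forall v', same_elt v' v -> exists2 u', same_elt u' u & (size u' <= size v')%N.

Definition in_parabolic (J : {set 'I_n}) (w : seq 'I_n) : bool := all (mem J) w.

Definition is_longest (J : {set 'I_n}) (u : seq 'I_n) : Prop :=
  in_parabolic J u /\ forall v, in_parabolic J v -> length_le v u.

Definition is_root (b : 'rV[int]_n) : Prop :=
  exists w i, b = act w (sroot i).

Definition nonneg (v : 'rV[int]_n) : Prop := forall j, 0 <= v ord0 j.

Definition pos_root (b : 'rV[int]_n) : Prop := is_root b /\ nonneg b.

Definition inv_set (w : seq 'I_n) (b : 'rV[int]_n) : Prop :=
  pos_root b /\ pos_root (- act w b).

Definition in_span (J : {set 'I_n}) (v : 'rV[int]_n) : Prop :=
  forall j, j \notin J -> v ord0 j = 0.

Definition root_le (b b' : 'rV[int]_n) : Prop := nonneg (b' - b).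

(* Dynkin diagram: edge iff s_i, s_j do not commute *)
Definition dynkin_edge (i j : 'I_n) : Prop :=
  ~ (forall v, act [:: i; j] v = act [:: j; i] v).

Definition connected (J : {set 'I_n}) : Prop :=
  (exists i, i \in J) /\
  forall S : {set 'I_n}, S \subset J -> (exists i, i \in S) ->
    (forall x y, x \in S -> y \in J -> dynkin_edge x y -> y \in S) -> S = J.

(* Separability of w, where I = I_Phi(w); sepJ I J means that w|_{Phi_J}
   (whose inversion set is I ∩ span J) is separable in Phi_J. *)
Inductive sepJ (I : 'rV[int]_n -> Prop) : {set 'I_n} -> Prop :=
| sep_S1 (J : {set 'I_n}) : #|J| = 1%N -> sepJ I J
| sep_S2 (J : {set 'I_n}) (P : {set {set 'I_n}}) :
    partition P J -> (1 < #|P|)%N ->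
    (forall K1 K2 x y, K1 \in P -> K2 \in P -> K1 != K2 ->
        x \in K1 -> y \in K2 -> ~ dynkin_edge x y) ->
    (forall K, K \in P -> sepJ I K) -> sepJ I J
| sep_S3 (J : {set 'I_n}) (i : 'I_n) : connected J -> i \in J -> sepJ I (J :\ i) ->
    ((forall b, pos_root b -> in_span J b -> root_le (sroot i) b -> I b) \/
     (forall b, pos_root b -> in_span J b -> root_le (sroot i) b -> ~ I b)) ->
    sepJ I J.

Definition separable (w : seq 'I_n) : Prop := sepJ (inv_set w) setT.

Definition nested (N : {set {set 'I_n}}) : Prop :=
  [/\ (forall J, J \in N -> connected J),
      (forall I J, I \in N -> J \in N -> [|| I \subset J, J \subset I | [disjoint I & J]])
    & (forall S : {set {set 'I_n}}, S \subset N -> (2 <= #|S|)%N ->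
         (forall I J, I \in S -> J \in S -> I != J -> [disjoint I & J]) ->
         ~ connected (\bigcup_(J in S) J))].

Definition monotonic_order (N : {set {set 'I_n}}) (s : seq {set 'I_n}) : Prop :=
  perm_eq s (enum N) /\
  forall I J, I \in N -> J \in N -> J \proper I -> (index I s < index J s)%N.

End RootSystem.

(* Main.v *)
Require Import Defs.
From mathcomp Require Import all_boot all_order all_algebra.
From mathcomp Require Import zify ring lra.
From Stdlib Require Import Classical.
Set Implicit Arguments. Unset Strict Implicit. Unset Printing Implicit Defensive.
Import Order.TTheory GRing.Theory Num.Theory.
Local Open Scope ring_scope.

Section Basic.
Variables (n : nat) (A : 'M[int]_n).

Definition cf (i : 'I_n) (v : 'rV[int]_n) : int := \sum_j A i j * v ord0 j.

Lemma srootE (i j : 'I_n) : sroot i ord0 j = (i == j)%:R.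
Proof. by rewrite /sroot mxE eqxx /= eq_sym. Qed.

Lemma cfD i u v : cf i (u + v) = cf i u + cf i v.
Proof. by rewrite /cf -big_split; apply: eq_bigr => j _; rewrite mxE mulrDr. Qed.

Lemma cfZ i a v : cf i (a *: v) = a * cf i v.
Proof. rewrite /cf mulr_sumr; apply: eq_bigr => j _; rewrite mxE; ring. Qed.

Lemma cfN i v : cf i (- v) = - cf i v.
Proof. by rewrite -scaleN1r cfZ mulN1r. Qed.

Lemma cf0 i : cf i 0 = 0.
Proof. by rewrite /cf big1 // => j _; rewrite mxE mulr0. Qed.

Lemma cf_sroot i j : cf i (sroot j) = A i j.
Proof.
rewrite /cf (bigD1 j) //= big1 => [|k /negbTE kj]; first by rewrite srootE eqxx mulr1 addr0.
by rewrite srootE eq_sym kj mulr0.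
Qed.

Lemma reflE i v : refl A i v = v - cf i v *: sroot i.
Proof. by []. Qed.

Lemma refl_coord i v j :
  refl A i v ord0 j = if j == i then v ord0 j - cf i v else v ord0 j.
Proof.
rewrite reflE !mxE /=; case: eqP => _; by rewrite ?mulr1 ?mulr0 ?subr0.
Qed.

Lemma reflD i u v : refl A i (u + v) = refl A i u + refl A i v.
Proof. rewrite !reflE cfD scalerDl; apply/rowP => j; rewrite !mxE; ring. Qed.

Lemma reflZ i a v : refl A i (a *: v) = a *: refl A i v.
Proof. rewrite !reflE cfZ; apply/rowP => j; rewrite !mxE; ring. Qed.

Lemma reflN i v : refl A i (- v) = - refl A i v.
Proof. by rewrite -!scaleN1r reflZ. Qed.

Lemma refl0 i : refl A i 0 = 0.
Proof. by rewrite reflE cf0 scale0r subr0. Qed.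

Lemma actD w u v : act A w (u + v) = act A w u + act A w v.
Proof. elim: w => //= a w IH; by rewrite IH reflD. Qed.

Lemma actZ w a v : act A w (a *: v) = a *: act A w v.
Proof. elim: w => //= b w IH; by rewrite IH reflZ. Qed.

Lemma actN w v : act A w (- v) = - act A w v.
Proof. by rewrite -!scaleN1r actZ. Qed.

Lemma act0 w : act A w 0 = 0.
Proof. by elim: w => //= a w ->; rewrite refl0. Qed.

Lemma act_cat u v x : act A (u ++ v) x = act A u (act A v x).
Proof. by rewrite /act foldr_cat. Qed.

Lemma act_rcons u i x : act A (rcons u i) x = act A u (refl A i x).
Proof. by rewrite -cats1 act_cat. Qed.

Lemma act_sum w (I : finType) (P : pred I) (F : I -> 'rV[int]_n) :
  act A w (\sum_(i | P i) F i) = \sum_(i | P i) act A w (F i).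
Proof. exact: (big_morph _ (actD w) (act0 w)). Qed.

Lemma act_coord_fix w v i : (forall j, j \in w -> j != i) ->
  act A w v ord0 i = v ord0 i.
Proof.
elim: w => //= a w IH H; rewrite refl_coord.
have -> : (i == a) = false by apply/negbTE; rewrite eq_sym; apply: H; rewrite inE eqxx.
by apply: IH => j jw; apply: H; rewrite inE jw orbT.
Qed.

Lemma act_span (J : {set 'I_n}) (w : seq 'I_n) v : (forall j, j \in w -> j \in J) -> in_span J v -> in_span J (act A w v).
Proof.
elim: w => //= a w IH H Hv j jJ; rewrite refl_coord.
have -> : (j == a) = false by apply/negbTE; apply: contraNneq jJ => ->; apply: H; rewrite inE eqxx.
by apply: IH => // k kw; apply: H; rewrite inE kw orbT.
Qed.

Lemma in_span_neg (J : {set 'I_n}) (v : 'rV[int]_n) : in_span J v -> in_span J (- v).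
Proof. by move=> H j jJ; rewrite mxE H // oppr0. Qed.

End Basic.

Lemma filter_top (T : finType) (t : seq {set T}) (J : {set T}) : uniq t -> J \in t ->
  (forall K : {set T}, K \in t -> K \proper J -> (index J t < index K t)%N) ->
  [seq K : {set _} <- t | K \subset J] = J :: [seq K : {set _} <- t | K \proper J].
Proof.
move=> ut Jt; move: ut; case/splitPr: Jt => s1 s2.
rewrite cat_uniq /= => /and3P [_ /norP [Js1 _] /andP [Js2 _]] Hm.
have H1 : {in s1, forall K : {set T}, K \subset J = false}.
  move=> K Ks1; apply/negbTE/negP => KJ.
  have KneJ : K != J by apply: contraNneq Js1 => <-.
  have Kp : K \proper J by rewrite properEneq KneJ KJ.
  have Kt : K \in s1 ++ J :: s2 by rewrite mem_cat Ks1.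
  have := Hm K Kt Kp.
  rewrite !index_cat Ks1 (negbTE Js1) /= eqxx addn0 => H.
  have := index_mem K s1; rewrite Ks1 => H2; by move: (ltn_trans H H2); rewrite ltnn.
have H1' : {in s1, forall K : {set T}, K \proper J = false}.
  by move=> K /H1 KJ; apply/negbTE; rewrite properEneq KJ andbF.
rewrite !filter_cat /= subxx properxx /=.
rewrite (eq_in_filter H1) (eq_in_filter H1') filter_pred0 /=; congr (_ :: _).
apply: eq_in_filter => K Ks2; rewrite properEneq.
by have -> : K != J by apply: contraNneq Js2 => <-.
Qed.


Section Cartan.
Variables (n : nat) (A : 'M[int]_n).
Hypothesis Hdiag : forall i, A i i = 2.
Hypothesis Hoff : forall i j, i != j -> A i j <= 0.
Hypothesis Hsym0 : forall i j, A i j = 0 <-> A j i = 0.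
Variable d : 'I_n -> int.
Hypothesis Hdpos : forall i, 0 < d i.
Hypothesis Hdsym : forall i j, d i * A i j = d j * A j i.
Hypothesis Hpd : forall x : 'rV[int]_n, x != 0 ->
  0 < \sum_i \sum_j x ord0 i * d i * A i j * x ord0 j.

Lemma refl_sroot i : refl A i (sroot i) = - sroot i.
Proof. rewrite reflE cf_sroot Hdiag; apply/rowP => j; rewrite !mxE; ring. Qed.

Lemma reflK i v : refl A i (refl A i v) = v.
Proof.
rewrite [refl A i v]reflE reflD reflN reflZ refl_sroot reflE.
apply/rowP => j; rewrite !mxE; ring.
Qed.

Lemma cf_refl i v : cf A i (refl A i v) = - cf A i v.
Proof. rewrite reflE cfD cfN cfZ cf_sroot Hdiag; ring. Qed.

Lemma act_revK w x : act A (rev w) (act A w x) = x.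
Proof.
elim: w x => //= a w IH x; by rewrite rev_cons act_rcons reflK IH.
Qed.

Lemma act_Krev w x : act A w (act A (rev w) x) = x.
Proof. by rewrite -{1}(revK w) act_revK. Qed.

Definition Bf (u v : 'rV[int]_n) : int := \sum_i u ord0 i * d i * cf A i v.

Lemma BfE u v : Bf u v = \sum_i \sum_j u ord0 i * d i * A i j * v ord0 j.
Proof. apply: eq_bigr => i _; rewrite /cf mulr_sumr; apply: eq_bigr => j _; ring. Qed.

Lemma Bf_sym u v : Bf u v = Bf v u.
Proof.
rewrite !BfE [RHS]exchange_big; apply: eq_bigr => i _; apply: eq_bigr => j _.
transitivity (u ord0 i * (d i * A i j) * v ord0 j); first ring.
rewrite Hdsym; ring.
Qed.

Lemma BfDl u w v : Bf (u + w) v = Bf u v + Bf w v.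
Proof. rewrite /Bf -big_split /=; apply: eq_bigr => i _; rewrite mxE; ring. Qed.

Lemma BfZl a u v : Bf (a *: u) v = a * Bf u v.
Proof. rewrite /Bf mulr_sumr; apply: eq_bigr => i _; rewrite mxE; ring. Qed.

Lemma BfNl u v : Bf (- u) v = - Bf u v.
Proof. by rewrite -scaleN1r BfZl mulN1r. Qed.

Lemma BfDr u w v : Bf v (u + w) = Bf v u + Bf v w.
Proof. by rewrite Bf_sym BfDl !(Bf_sym _ v). Qed.

Lemma BfZr a u v : Bf v (a *: u) = a * Bf v u.
Proof. by rewrite Bf_sym BfZl (Bf_sym u). Qed.

Lemma BfNr u v : Bf v (- u) = - Bf v u.
Proof. by rewrite Bf_sym BfNl (Bf_sym u). Qed.

Lemma Bf_srootl k v : Bf (sroot k) v = d k * cf A k v.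
Proof.
rewrite /Bf (bigD1 k) //= big1 => [|i /negbTE ik]; first by rewrite srootE eqxx mul1r addr0.
by rewrite srootE eq_sym ik !mul0r.
Qed.

Lemma Bf_srootr k v : Bf v (sroot k) = d k * cf A k v.
Proof. by rewrite Bf_sym Bf_srootl. Qed.

Lemma Bf_refl k u v : Bf (refl A k u) (refl A k v) = Bf u v.
Proof.
rewrite !reflE !(BfDl, BfDr, BfNl, BfNr, BfZl, BfZr) !Bf_srootl !Bf_srootr cf_sroot Hdiag.
ring.
Qed.

Lemma Bf_act w u v : Bf (act A w u) (act A w v) = Bf u v.
Proof. elim: w => //= a w IH; by rewrite Bf_refl IH. Qed.

Lemma Bf_pd x : x != 0 -> 0 < Bf x x.
Proof. by move=> /Hpd; rewrite BfE. Qed.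

Lemma root_act w b : is_root A b -> is_root A (act A w b).
Proof. by case=> u [i ->]; exists (w ++ u), i; rewrite act_cat. Qed.

Lemma root_opp b : is_root A b -> is_root A (- b).
Proof.
case=> u [i ->]; exists (rcons u i), i; by rewrite act_rcons refl_sroot actN.
Qed.

Lemma sroot_neq0 (k : 'I_n) : sroot k != 0.
Proof. apply/eqP => /rowP /(_ k); rewrite srootE eqxx !mxE. done. Qed.

Lemma root_neq0 b : is_root A b -> b != 0.
Proof.
case=> u [k ->]; apply/eqP => H; have := sroot_neq0 k.
by rewrite -(act_revK u (sroot k)) H act0 eqxx.
Qed.

Definition coh (v : 'rV[int]_n) := nonneg v \/ nonneg (- v).

Definition Pinv (k : 'I_n) (v : 'rV[int]_n) :=
  Bf v v = 2 * d k /\ exists z : 'rV[int]_n, forall i, d i * v ord0 i = d k * z ord0 i.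

Lemma Pinv_sroot k : Pinv k (sroot k).
Proof.
split; first by rewrite Bf_srootl cf_sroot Hdiag mulrC.
exists (sroot k) => i; rewrite !srootE; case: eqP => [->|]; first by [].
by rewrite !mulr0.
Qed.

Lemma Pinv_opp k v : Pinv k v -> Pinv k (- v).
Proof.
case=> HB [z Hz]; split; first by rewrite BfNl BfNr opprK.
exists (- z) => i; rewrite !mxE mulrN Hz; ring.
Qed.

Lemma Pinv_refl k j v : Pinv k v -> Pinv k (refl A j v).
Proof.
case=> HB [z Hz]; split; first by rewrite Bf_refl.
exists (z - (\sum_l A l j * z ord0 l) *: sroot j) => i.
rewrite refl_coord !mxE /=; case: eqP => [->|_] /=; last by rewrite Hz mulr0 subr0.
rewrite mulr1 mulrBr Hz /cf mulr_sumr mulrBr mulr_sumr; congr (_ - _).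
apply: eq_bigr => l _; rewrite mulrA Hdsym mulrAC Hz; ring.
Qed.

Lemma coh_step k v j : Pinv k v -> nonneg v -> coh (refl A j v).
Proof.
move=> HP Hv.
set x := v ord0 j; set y := refl A j v ord0 j.
have yE : y = x - cf A j v by rewrite /y refl_coord eqxx.
have [y0|y0] := lerP 0 y.
  left => i; rewrite refl_coord; case: eqP => [->|_]; [by rewrite -yE | exact: Hv].
case: (classic (forall i, i != j -> v ord0 i = 0)) => [H0|].
  right => i; rewrite mxE refl_coord; case: eqP => [->|/eqP ij].
    by rewrite -/x -yE oppr_ge0 ltW.
  by rewrite H0 // oppr0.
move=> /not_all_ex_not [i0] Hi0; have [i0j vi0] := imply_to_and _ _ Hi0.
exfalso.
set p := v - x *: sroot j.
have pE i : p ord0 i = if i == j then 0 else v ord0 i.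
  rewrite /p !mxE /=; case: (eqVneq i j) => [->|ij] /=; first by rewrite ?eqxx /x /=; ring.
  by rewrite mulr0 subr0.
have p0 : p != 0.
  apply/eqP => /rowP /(_ i0); rewrite pE (negbTE i0j) mxE; exact: vi0.
have Bp : 1 <= Bf p p by have := Bf_pd p0; lia.
have cfp : cf A j p = cf A j v - x * 2.
  by rewrite /p cfD cfN cfZ cf_sroot Hdiag.
have cfp0 : cf A j p <= 0.
  rewrite /cf; apply: sumr_le0 => l _; rewrite pE; case: eqP => [_|/eqP lj]; first by rewrite mulr0.
  by apply: mulr_le0_ge0; [apply: Hoff; rewrite eq_sym | apply: Hv].
have x1 : 1 <= x by lia.
have vE : v = p + x *: sroot j by rewrite /p subrK.
clearbody p.
have BvE : Bf v v = Bf p p - 2 * x * y * d j.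
  rewrite {1 2}vE !(BfDl, BfDr, BfZl, BfZr) !Bf_srootl !Bf_srootr cf_sroot Hdiag.
  rewrite cfp yE; ring.
case: HP => [HB [z Hz]].
have [HB' [z' Hz']] := Pinv_refl j (conj HB (ex_intro _ z Hz)).
have Hzj := Hz j; have Hzj' := Hz' j; rewrite -/x in Hzj; rewrite -/y in Hzj'.
have dj := Hdpos j; have dk := Hdpos k.
have zj1 : 1 <= z ord0 j by nia.
have zj'1 : z' ord0 j <= -1 by nia.
have X1 : d k <= d j * x by nia.
have Y1 : d k <= d j * (- y) by nia.
have E : 2 * d k = Bf p p + 2 * (d j * x) * (- y) by rewrite -HB BvE; ring.
have L1 : d j < d k by nia.
have L2 : d j * (2 * d k) >= 2 * ((d j * x) * (d j * - y)) + d j by rewrite E; nia.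
nia.
Qed.

Lemma root_Pinv w k : Pinv k (act A w (sroot k)) /\ coh (act A w (sroot k)).
Proof.
elim: w => /= [|j w [HP Hc]].
  split; first exact: Pinv_sroot.
  by left => i; rewrite srootE; case: eqP.
split; first exact: Pinv_refl.
case: Hc => Hc; first exact: coh_step HP Hc.
have := coh_step j (Pinv_opp HP) Hc; rewrite /coh reflN opprK.
by case; [right|left].
Qed.

Lemma root_coh b : is_root A b -> coh b.
Proof. by case=> w [k ->]; case: (root_Pinv w k). Qed.

Lemma root_is_simple c j : is_root A c -> nonneg c -> ~ nonneg (refl A j c) ->
  c = sroot j.
Proof.
move=> Hr Hc Hn.
have Hr' : is_root A (refl A j c) by have := root_act [:: j] Hr.
case: (root_coh Hr') => // Hneg.
have off i : i != j -> c ord0 i = 0.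
  move=> ij; have := Hneg i; have := Hc i; rewrite mxE refl_coord (negbTE ij); lia.
have cE : c = c ord0 j *: sroot j.
  apply/rowP => i; rewrite mxE srootE; case: (eqVneq j i) => [->|ji]; first by rewrite mulr1.
  by rewrite mulr0 off // eq_sym.
have cfc : cf A j c = c ord0 j * 2 by rewrite {1}cE cfZ cf_sroot Hdiag.
have cpos : 0 < c ord0 j.
  case: (lerP (c ord0 j) 0) => // cle; exfalso; apply: Hn => i.
  rewrite refl_coord; case: eqP => [->|_]; last exact: Hc.
  rewrite cfc; lia.
case: Hr => w [k Hw].
have H1 := act_revK w (sroot k); rewrite -Hw {1}cE actZ in H1.
have := congr1 (fun M : 'rV[int]_n => M ord0 k) H1; rewrite /= mxE srootE eqxx => Hk.
have Hk' : c ord0 j * act A (rev w) (sroot j) ord0 k = 1 by rewrite Hk.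
move: Hk' cpos; set t := act A (rev w) (sroot j) ord0 k; set cj := c ord0 j => Hk' cpos.
have t1 : 0 < t by nia.
have cj1 : cj = 1 by nia.
by rewrite cE -/cj cj1 scale1r.
Qed.

Lemma conj_refl u i k : act A u (sroot i) = sroot k ->
  forall v, act A (u ++ i :: rev u) v = refl A k v.
Proof.
move=> Hu v; rewrite act_cat /= reflE actD actN actZ Hu act_Krev reflE.
set z := act A (rev u) v.
have dik : d i = d k.
  have := Bf_act u (sroot i) (sroot i); rewrite Hu !Bf_srootl !cf_sroot !Hdiag.
  move=> /eqP; rewrite -subr_eq0 -mulrBl mulf_eq0 /= subr_eq0 => /eqP; lia.
have : d i * cf A i z = d k * cf A k v.
  by rewrite -Bf_srootl -(Bf_act u) Hu act_Krev Bf_srootl.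
rewrite dik => /mulfI -> //; by rewrite gt_eqF.
Qed.

Lemma deletion r i : ~ nonneg (act A r (sroot i)) ->
  exists r', same_elt A r' (r ++ [:: i]) /\ (size r' < size r)%N.
Proof.
elim: r => /= [|j r IH] Hn.
  by exfalso; apply: Hn => l; rewrite srootE; case: eqP.
case: (classic (nonneg (act A r (sroot i)))) => Hc; last first.
  have [r' [Hs Hsz]] := IH Hc; exists (j :: r'); split => // x /=.
  by rewrite Hs.
have Hroot : is_root A (act A r (sroot i)) by exists r, i.
have := root_is_simple Hroot Hc Hn => Hs.
exists r; split => // x /=.
by rewrite -(conj_refl Hs) !act_cat /= act_revK reflK.
Qed.

Lemma nonneg_root_neg b : is_root A b -> nonneg b -> ~ nonneg (- b).
Proof.
move=> Hr Hb Hn; have := root_neq0 Hr; apply/negP; rewrite negbK.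
apply/eqP/rowP => l; have := Hb l; have := Hn l; rewrite !mxE => H1 H2; change (b ord0 l = 0); apply/eqP; rewrite eq_le H2 andbT -oppr_ge0; exact: H1.
Qed.

Lemma longest_neg J w0 i : is_longest A J w0 -> i \in J -> nonneg (- act A w0 (sroot i)).
Proof.
move=> [Hpar Hlong] iJ.
have Hroot : is_root A (act A w0 (sroot i)) by exists w0, i.
case: (root_coh Hroot) => // Hpos; exfalso.
have Hpar' : in_parabolic J (w0 ++ [:: i]).
  by rewrite /in_parabolic all_cat; apply/andP; split => //=; rewrite iJ.
have Hl := Hlong _ Hpar'.
have step : forall v', same_elt A v' w0 -> exists v'', same_elt A v'' w0 /\ (size v'' < size v')%N.
  move=> v' Hv'; have [u' Hu' Hsz] := Hl v' Hv'.
  have Hu'i : ~ nonneg (act A u' (sroot i)).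
    rewrite Hu' act_cat /= refl_sroot actN; exact: nonneg_root_neg.
  have [r' [Hr' Hsz']] := deletion Hu'i.
  exists r'; split; last exact: leq_trans Hsz' Hsz.
  by move=> x; rewrite Hr' act_cat /= Hu' act_cat /= reflK.
suff : forall m v', same_elt A v' w0 -> (size v' <= m)%N -> False.
  by move/(_ (size w0) w0 (fun x => erefl) (leqnn _)).
elim=> [|m IH] v' Hv' Hsz; have [v'' [Hv'' Hlt]] := step v' Hv'.
  by move: (leq_trans Hlt Hsz).
by apply: (IH v'' Hv''); rewrite -ltnS (leq_trans Hlt Hsz).
Qed.

Lemma row_decomp (J : {set 'I_n}) (c : 'rV[int]_n) : in_span J c ->
  c = \sum_(i in J) c ord0 i *: sroot i.
Proof.
move=> Hc; apply/rowP => j; rewrite summxE.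
case: (boolP (j \in J)) => jJ.
  rewrite (bigD1 j) //= big1 => [|i /andP [_ ij]]; first by rewrite mxE srootE eqxx mulr1 addr0.
  by rewrite mxE srootE (negbTE ij) mulr0.
rewrite Hc // big1 // => i iJ; rewrite mxE srootE.
case: eqP => [ij|_]; last by rewrite mulr0.
by move: jJ; rewrite -ij iJ.
Qed.

Lemma longest_neg_span J w0 c : is_longest A J w0 -> in_span J c -> nonneg c ->
  nonneg (- act A w0 c).
Proof.
move=> Hl Hs Hc j; rewrite (row_decomp Hs) act_sum -sumrN summxE.
apply: sumr_ge0 => i iJ; rewrite actZ -scalerN mxE.
apply: mulr_ge0; first exact: Hc.
exact: (longest_neg Hl iJ).
Qed.


Lemma in_span_sub (K J : {set 'I_n}) b : K \subset J -> in_span K b -> in_span J b.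
Proof. move=> KJ Hb j jJ; apply: Hb; apply: contra jJ; exact: (subsetP KJ). Qed.

Lemma partition_sub (P : {set {set 'I_n}}) J K : partition P J -> K \in P -> K \subset J.
Proof.
case/and3P => /eqP <- _ _ KP; apply/subsetP => x xK; apply/bigcupP; by exists K.
Qed.

Lemma sepJ_ext I J : sepJ A I J -> forall I',
  (forall b, pos_root A b -> in_span J b -> (I b <-> I' b)) -> sepJ A I' J.
Proof.
elim=> {J} [J HJ | J P Hpart HP Hne HK IH | J i Hc iJ Hsub IH Hcond] I' Hag.
- exact: sep_S1.
- apply: (sep_S2 Hpart HP Hne) => K KP; apply: IH => // b Hb Hs.
  apply: Hag => //; exact: in_span_sub (partition_sub Hpart KP) Hs.
- apply: (sep_S3 Hc iJ).
    apply: IH => b Hb Hs; apply: Hag => //; apply: in_span_sub Hs; exact: subD1set.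
  case: Hcond => H; [left|right] => b Hb Hs Hle.
    by apply/Hag => //; apply: H.
  by move/Hag => /(_ Hb Hs); apply: H.
Qed.

Lemma sepJ_compl I J : sepJ A I J -> sepJ A (fun b => ~ I b) J.
Proof.
elim=> {J} [J HJ | J P Hpart HP Hne HK IH | J i Hc iJ Hsub IH Hcond].
- exact: sep_S1.
- exact: (sep_S2 Hpart HP Hne).
- apply: (sep_S3 Hc iJ IH).
  case: Hcond => H; [right|left] => b Hb Hs Hle; first by move/(_ (H b Hb Hs Hle)).
  exact: H.
Qed.


Lemma edge_A x y : dynkin_edge A x y -> A x y != 0.
Proof.
move=> He; apply/negP => /eqP H0; apply: He => v.
have H0' : A y x = 0 by apply/Hsym0.
rewrite /= !reflE !(cfD, cfN, cfZ) !cf_sroot H0 H0'.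
apply/rowP => j; rewrite !mxE; ring.
Qed.

Lemma A_edge x y : x != y -> A x y != 0 -> dynkin_edge A x y.
Proof.
move=> xy H He; have := congr1 (fun M : 'rV[int]_n => M ord0 x) (He (sroot y)).
rewrite /= !reflE !(cfD, cfN, cfZ) !cf_sroot Hdiag !mxE /= eqxx (negbTE xy) /=.
move=> E; move/eqP: H; apply; lia.
Qed.

Lemma A_sym_neq x y : (A x y != 0) = (A y x != 0).
Proof. by apply/negb_inj; rewrite !negbK; apply/eqP/eqP; case: (Hsym0 x y). Qed.

Section Comp.
Variable J' : {set 'I_n}.
Definition erel : rel 'I_n := fun x y => [&& x \in J', y \in J' & A x y != 0].

Lemma erel_sym : symmetric erel.
Proof. by move=> x y; rewrite /erel A_sym_neq andbCA. Qed.

Definition comps := equivalence_partition (connect erel) J'.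

Lemma comps_partition : partition comps J'.
Proof.
apply: equivalence_partitionP => x y z _ _ _; split; first exact: connect0.
by move=> Hxy; apply: same_connect => //; apply: sym_connect_sym; exact: erel_sym.
Qed.

Lemma compsP C : C \in comps -> exists2 x, x \in J' & C = [set y in J' | connect erel x y].
Proof. by case/imsetP => x xJ ->; exists x. Qed.

Lemma comps_adj C l j : C \in comps -> l \in C -> j \in J' -> A l j != 0 -> j \in C.
Proof.
case/compsP => x xJ -> ; rewrite !inE => /andP [lJ Hxl] jJ Hlj.
rewrite jJ /=; apply: connect_trans Hxl _; apply: connect1; by rewrite /erel lJ jJ.
Qed.

Lemma comps_sub C : C \in comps -> C \subset J'.
Proof. exact: partition_sub comps_partition. Qed.

Lemma comps_disj C1 C2 y : C1 \in comps -> C2 \in comps -> y \in C1 -> y \in C2 -> C1 = C2.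
Proof.
move=> H1 H2 y1 y2; have := comps_partition; case/and3P => _ /trivIsetP Htr _.
apply/eqP; apply: contraT => neq; have := Htr _ _ H1 H2 neq.
by move/disjointFr => /(_ _ y1); rewrite y2.
Qed.

Lemma comps_noedge C1 C2 x y : C1 \in comps -> C2 \in comps -> C1 != C2 ->
  x \in C1 -> y \in C2 -> ~ dynkin_edge A x y.
Proof.
move=> H1 H2 neq x1 y2 He; move/eqP: neq; apply.
apply: (comps_disj H1 H2 _ y2); apply: (comps_adj H1 x1) => //; last exact: edge_A.
exact: (subsetP (comps_sub H2)).
Qed.

Lemma comps_connected C : C \in comps -> connected A C.
Proof.
move=> HC; have [x xJ CE] := compsP HC.
have xC : x \in C by rewrite CE inE xJ connect0.
split; first by exists x.
move=> S SC [s0 s0S] Hcl; apply/eqP; rewrite eqEsubset SC /=; apply/subsetP => y yC.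
have s0C := subsetP SC _ s0S.
have : connect erel s0 y.
  move: s0C yC; rewrite CE !inE => /andP [_ H1] /andP [_ H2].
  have Hsym := sym_connect_sym erel_sym.
  by apply: connect_trans H2; rewrite Hsym.
case/connectP => p Hp ->; elim: p s0 s0S s0C Hp {yC} => //= a p IH s0 s0S s0C /andP [He Hp].
have aC : a \in C.
  move: He; rewrite /erel => /and3P [_ aJ Ha]; exact: comps_adj HC s0C aJ Ha.
apply: (IH a) => //.
case: (eqVneq s0 a) => [<- //|ne]; apply: (Hcl s0) => //.
move: He; rewrite /erel => /and3P [_ _ Ha]; exact: A_edge.
Qed.

Lemma comps_split C (K : {set 'I_n}) : C \in comps -> K \subset J' -> connected A K ->
  K \subset C \/ (forall j l, j \in K -> l \in C -> A j l = 0).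
Proof.
move=> HC KJ [_ HK].
case: (classic (exists j l, [/\ j \in K, l \in C & A j l != 0])); last first.
  move=> H; right => j l jK lC; case: (eqVneq (A j l) 0) => // Hne; exfalso; apply: H; by exists j, l.
case=> j [l [jK lC Hjl]]; left.
have jC : j \in C.
  apply: (comps_adj HC lC); [exact: (subsetP KJ) | by rewrite A_sym_neq].
have jKC : j \in K :&: C by rewrite inE jK jC.
have := HK (K :&: C) (subsetIl _ _) (ex_intro _ j jKC).
move=> H; suff <- : K :&: C = K by apply: subsetIr.
apply: H.
move=> x y; rewrite inE => /andP [xK xC] yK He; rewrite inE yK /=.
apply: (comps_adj HC xC); [exact: (subsetP KJ) | exact: edge_A].
Qed.

End Comp.


Variables (N : {set {set 'I_n}}) (s : seq {set 'I_n}) (w0 : {set 'I_n} -> seq 'I_n).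
Hypothesis HN1 : forall J, J \in N -> connected A J.
Hypothesis HN2 : forall I J, I \in N -> J \in N -> [|| I \subset J, J \subset I | [disjoint I & J]].
Hypothesis HN3 : forall S : {set {set 'I_n}}, S \subset N -> (2 <= #|S|)%N ->
         (forall I J, I \in S -> J \in S -> I != J -> [disjoint I & J]) ->
         ~ connected A (\bigcup_(J in S) J).
Hypothesis Hperm : perm_eq s (enum N).
Hypothesis Hmono : forall I J, I \in N -> J \in N -> J \proper I -> (index I s < index J s)%N.
Hypothesis Hlong : forall J, J \in N -> is_longest A J (w0 J).

Lemma mem_s K : (K \in s) = (K \in N).
Proof. by rewrite (perm_mem Hperm) mem_enum. Qed.

Lemma uniq_s : uniq s.
Proof. by rewrite (perm_uniq Hperm) enum_uniq. Qed.

Lemma letters_flat (t : seq {set 'I_n}) j : j \in flatten [seq w0 K | K <- t] ->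
  exists2 K, K \in t & j \in w0 K.
Proof. by case/flattenP => w /mapP [K Kt ->] jw; exists K. Qed.

Lemma letter_in K j : K \in N -> j \in w0 K -> j \in K.
Proof. by move=> /Hlong [Hp _] jw; move/allP: Hp => /(_ j jw). Qed.

Definition wle (J : {set 'I_n}) := flatten [seq w0 K | K <- [seq K : {set _} <- s | K \subset J]].
Definition wlt (J : {set 'I_n}) := flatten [seq w0 K | K <- [seq K : {set _} <- s | K \proper J]].

Lemma fix_word (C : {set 'I_n}) w z : (forall j, j \in w -> forall l, l \in C -> A j l = 0) ->
  in_span C z -> act A w z = z.
Proof.
elim: w => //= a w IH H Hz; rewrite IH //; last by move=> j jw; apply: H; rewrite inE jw orbT.
rewrite reflE /cf big1 ?scale0r ?subr0 // => l _.
case: (boolP (l \in C)) => lC; first by rewrite H ?inE ?eqxx // mul0r.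
by rewrite Hz // mulr0.
Qed.

Lemma act_filter (C : {set 'I_n}) (t : seq {set 'I_n}) b :
  (forall K, K \in t -> K \in N /\ (K \subset C \/ forall j l, j \in K -> l \in C -> A j l = 0)) ->
  in_span C b ->
  act A (flatten [seq w0 K | K <- t]) b = act A (flatten [seq w0 K | K <- [seq K : {set _} <- t | K \subset C]]) b.
Proof.
elim: t => //= K t IH H Hb.
have [KN HK] := H K (mem_head _ _).
rewrite act_cat IH //; last by move=> K' K't; apply: H; rewrite inE K't orbT.
have Hz : in_span C (act A (flatten [seq w0 K | K <- [seq K : {set _} <- t | K \subset C]]) b).
  apply: act_span Hb => j /letters_flat [K' K't jK'].
  move: K't; rewrite mem_filter => /andP [K'C K't].
  apply: (subsetP K'C); apply: (letter_in _ jK'); have [] := H K'; by rewrite // inE K't orbT.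
case: (boolP (K \subset C)) => KC /=; first by rewrite act_cat.
case: HK => [KC'|HK]; first by rewrite KC' in KC.
apply: fix_word Hz => j jw l lC; apply: HK lC; exact: letter_in KN jw.
Qed.

Lemma cover_exists J : connected A J ->
  exists2 i, i \in J & forall K, K \in N -> K \proper J -> i \notin K.
Proof.
move=> Hc; case: (classic (exists2 i, i \in J & forall K, K \in N -> K \proper J -> i \notin K)) => // Hno.
exfalso.
have Hcov : forall i, i \in J -> exists2 K, K \in N & K \proper J /\ i \in K.
  move=> i iJ; apply: NNPP => Hn; apply: Hno; exists i => // K KN KJ.
  apply/negP => iK; apply: Hn; by exists K.
set F := [set K in N | K \proper J].
set M := [set K in F | [forall K', (K' \in F) ==> (K \subset K') ==> (K' == K)]].
have Hmax : forall K, K \in F -> exists2 K', K' \in M & K \subset K'.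
  move=> K KF.
  have HK : (K \in F) && (K \subset K) by rewrite KF subxx.
  case: (@arg_maxnP _ K (fun K' => (K' \in F) && (K \subset K')) (fun K' => #|K'|) HK).
  move=> K' /andP [K'F KK'] Hm; exists K' => //.
  rewrite inE K'F /=; apply/forallP => K''; apply/implyP => K''F; apply/implyP => K'K''.
  rewrite eq_sym eqEcard K'K'' /=; apply: Hm; rewrite K''F /=; exact: subset_trans KK' K'K''.
have MF : forall K, K \in M -> K \in F by move=> K; rewrite inE => /andP [].
have MN : forall K, K \in M -> K \in N by move=> K /MF; rewrite inE => /andP [].
have MJ : forall K, K \in M -> K \proper J by move=> K /MF; rewrite inE => /andP [].
have Mmax : forall K K', K \in M -> K' \in F -> K \subset K' -> K' = K.
  move=> K K'; rewrite inE => /andP [_ /forallP H] K'F KK'.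
  by apply/eqP; move: (H K'); rewrite K'F KK'.
have UE : \bigcup_(K in M) K = J.
  apply/eqP; rewrite eqEsubset; apply/andP; split.
    by apply/bigcupsP => K /MJ /proper_sub.
  apply/subsetP => i iJ; have [K KN [KJ iK]] := Hcov i iJ.
  have KF : K \in F by rewrite inE KN KJ.
  have [K' K'M KK'] := Hmax K KF; apply/bigcupP; exists K' => //; exact: (subsetP KK').
have [i0 i0J] := Hc.1.
case: (leqP 2 #|M|) => HM.
  apply: (HN3 _ HM) => [|K1 K2 K1M K2M neq|]; last by rewrite UE.
    by apply/subsetP => K /MN.
  have := HN2 (MN _ K1M) (MN _ K2M); case/or3P => // H.
    by move: neq; rewrite (Mmax _ _ K1M (MF _ K2M) H) eqxx.
  by move: neq; rewrite (Mmax _ _ K2M (MF _ K1M) H) eqxx.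
move: i0J; rewrite -UE => /bigcupP [K KM i0K].
have allK : forall K', K' \in M -> K' = K.
  move=> K' K'M; apply/eqP; apply: contraT => neq.
  have : (#|[set K'; K]| <= #|M|)%N.
    by apply: subset_leq_card; apply/subsetP => x; case/set2P => ->.
  by rewrite cards2 neq; move: HM; case: #|M| => [|[]].
have := MJ _ KM; rewrite properE => /andP [_]; apply/negP; apply/negPn.
rewrite -{1}UE; apply/bigcupsP => K' K'M; by rewrite (allK _ K'M).
Qed.


Lemma compl_inv J u b : J \in N -> (forall j, j \in u -> j \in J) ->
  pos_root A b -> in_span J b ->
  (inv_set A (w0 J ++ u) b <-> ~ inv_set A u b).
Proof.
move=> JN Hu Hb Hs.
have Hl := Hlong JN.
have Hr : is_root A (act A u b) by apply: root_act; case: Hb.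
have Hsp : in_span J (act A u b) by apply: act_span.
rewrite /inv_set act_cat; split.
  move=> [_ [_ Hn]] [_ [Hr' Hc']].
  have H1 := longest_neg_span Hl (in_span_neg Hsp) Hc'.
  rewrite actN opprK in H1.
  exact: (nonneg_root_neg (root_act _ Hr) H1 Hn).
move=> Hn; split => //; split; first by apply: root_opp => //; apply: root_act.
case: (root_coh Hr) => Hc.
  exact: longest_neg_span Hl Hsp Hc.
by exfalso; apply: Hn; split => //; split => //; apply: root_opp.
Qed.

Lemma wle_notin J : J \notin N -> wle J = wlt J.
Proof.
move=> JN; rewrite /wle /wlt; congr flatten; congr map.
apply: eq_in_filter => K Ks; rewrite properEneq.
by have -> : K != J by apply: contraNneq JN => <-; rewrite -mem_s.
Qed.

Lemma wle_in J : J \in N -> wle J = w0 J ++ wlt J.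
Proof.
move=> JN; rewrite /wle /wlt (filter_top uniq_s) //; first by rewrite mem_s.
move=> K Ks KJ; apply: Hmono => //; by rewrite -mem_s.
Qed.

Lemma wlt_letters J j : j \in wlt J -> exists2 K, K \in N & K \proper J /\ j \in K.
Proof.
case/letters_flat => K; rewrite mem_filter => /andP [KJ Ks] jw.
have KN : K \in N by rewrite -mem_s.
by exists K => //; split => //; exact: letter_in KN jw.
Qed.

Lemma lemB J : sepJ A (inv_set A (wlt J)) J -> sepJ A (inv_set A (wle J)) J.
Proof.
move=> H; case: (boolP (J \in N)) => JN; last by rewrite wle_notin.
rewrite wle_in //; apply: (sepJ_ext (sepJ_compl H)) => b Hb Hs.
rewrite (compl_inv JN) //.
move=> j /wlt_letters [K _ [KJ jK]]; exact: (subsetP (proper_sub KJ)).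
Qed.

Lemma mainA m : forall J : {set 'I_n}, (#|J| <= m)%N -> connected A J -> sepJ A (inv_set A (wlt J)) J.
Proof.
elim: m => [|m IH] J HJ Hc.
  have [i iJ] := Hc.1; by move: HJ; rewrite leqn0 => /eqP /cards0_eq JE; rewrite JE inE in iJ.
case: (eqVneq #|J| 1%N) => J1; first exact: sep_S1.
have [i iJ Hi] := cover_exists Hc.
have J'p : J :\ i \proper J by apply: properD1.
have J'card : (#|J :\ i| <= m)%N.
  have := proper_card J'p; lia.
apply: (sep_S3 Hc iJ); last first.
  right => b Hb Hs Hle [_ [_ Hn]].
  have := Hn i; rewrite mxE act_coord_fix.
    have := Hle i; rewrite !mxE /= eqxx /=; lia.
  move=> j /wlt_letters [K KN [KJ jK]]; apply: contraNneq (Hi K KN KJ) => <- //.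
set J' := J :\ i.
have Hcomp : forall C : {set 'I_n}, C \in comps J' -> sepJ A (inv_set A (wlt J)) C.
  move=> C HC.
  have CJ' := comps_sub HC.
  have CJ : C \proper J by apply: sub_proper_trans CJ' J'p.
  have Cc := comps_connected HC.
  have HC1 : (#|C| <= m)%N by apply: leq_trans (subset_leq_card CJ') J'card.
  apply: (sepJ_ext (lemB (IH C HC1 Cc))) => b Hb Hs.
  suff E : act A (wlt J) b = act A (wle C) b by rewrite /inv_set E.
  rewrite /wlt (act_filter (C := C)) //.
    rewrite /wle -filter_predI; congr (act A (flatten (map _ _)) b).
    apply: eq_filter => K /=; case: (boolP (K \subset C)) => //= KC.
    by rewrite (sub_proper_trans KC CJ).
  move=> K; rewrite mem_filter => /andP [KJ Ks].
  have KN : K \in N by rewrite -mem_s.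
  split => //; apply: (comps_split HC) => //; last exact: HN1.
  by rewrite subsetD1 (proper_sub KJ) (Hi K KN KJ).
have Hpart := comps_partition J'.
case: (leqP 2 #|comps J'|) => Hc2.
  apply: (sep_S2 Hpart Hc2) => //.
  move=> K1 K2 x y K1P K2P neq xK1 yK2; exact: (comps_noedge K1P K2P neq xK1 yK2).
have [y yJ'] : exists y, y \in J'.
  apply/card_gt0P; have := cardsD1 i J; rewrite iJ.
  have : (0 < #|J|)%N by apply/card_gt0P; exists i.
  move: J1; rewrite /J'; lia.
have : y \in cover (comps J') by case/and3P: Hpart => /eqP -> _ _.
case/bigcupP => C HC yC.
suff -> : J' = C by apply: Hcomp.
case/and3P: Hpart => /eqP <- _ _; apply/eqP; rewrite eqEsubset; apply/andP; split.
  apply/bigcupsP => C' HC'; suff -> : C' = C by [].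
  apply/eqP; apply: contraT => neq.
  have : (#|[set C'; C]| <= #|comps J'|)%N.
    by apply: subset_leq_card; apply/subsetP => x; case/set2P => ->.
  by rewrite cards2 neq; move: Hc2; case: #|comps J'| => [|[]].
by apply: bigcup_sup.
Qed.

Lemma final : connected A setT -> sepJ A (inv_set A (flatten [seq w0 J | J <- s])) setT.
Proof.
move=> Hc; have := lemB (mainA (leqnn _) Hc).
suff -> : wle setT = flatten [seq w0 J | J <- s] by [].
rewrite /wle; congr flatten; congr map.
by rewrite (eq_filter (a2 := predT)) ?filter_predT // => K; rewrite subsetT.
Qed.

End Cartan.

Theorem lemma5p6 (n : nat) (A : 'M[int]_n) (N : {set {set 'I_n}})
  (s : seq {set 'I_n}) (w0 : {set 'I_n} -> seq 'I_n) :
  cartan_finite A ->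
  connected A setT ->
  nested A N ->
  monotonic_order N s ->
  (forall J, J \in N -> is_longest A J (w0 J)) ->
  separable A (flatten [seq w0 J | J <- s]).
Proof.
move=> [Hdiag Hoff Hsym0 [d [Hdpos Hdsym Hpd]]] Hc [HN1 HN2 HN3] [Hperm Hmono] Hlong.
rewrite /separable.
apply: final; eassumption.
Qed.
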